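(* Let $F(x)$ be a formula in prenex form with no free variables other than $x$. If the sentence $\forall xF(x)$ is safe, or the sentence $\exists xF(x)$ is safe, then the sentence $F(c)$ is safe for every object constant $c$.
   Context: Formulas are first-order formulas with object constants, predicate constants and equality, but no function constants of arity $>0$; primitive connectives $\bot,\land,\lor,\rightarrow$, quantifiers $\forall,\exists$; $\neg F$ is $F\rightarrow\bot$, $\top$ is $\bot\rightarrow\bot$. Restricted variables: for quantifier-free $G$, $\mathrm{RV}(G)$ is: $\emptyset$ if $G$ is an equality between two variables; the set of variables of $G$ if $G$ is any other atomic formula; $\mathrm{RV}(\bot)=\emptyset$; $\mathrm{RV}(G\land H)=\mathrm{RV}(G)\cup\mathrm{RV}(H)$; $\mathrm{RV}(G\lor H)=\mathrm{RV}(G)\cap\mathrm{RV}(H)$; $\mathrm{RV}(G\rightarrow H)=\emptyset$. An occurrence of a subformula or variable is positive if the number of implications containing it in their antecedent is even, negative otherwise, and strictly positive if it is in the antecedent of no implication. A prenex sentence $Q_1x_1\cdots Q_nx_nM$ ($M$ quantifier-free, $x_i$ distinct) is semi-safe if every strictly positive occurrence of every $x_i$ in $M$ belongs to a subformula $G\rightarrow H$ with $x_i\in\mathrm{RV}(G)$. Simplification transformations: $\neg\bot\mapsto\top$, $\neg\top\mapsto\bot$; $\bot\land G\mapsto\bot$, $G\land\bot\mapsto\bot$, $\top\land G\mapsto G$, $G\land\top\mapsto G$; $\bot\lor G\mapsto G$, $G\lor\bot\mapsto G$, $\top\lor G\mapsto\top$, $G\lor\top\mapsto\top$; $\bot\rightarrow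 G\mapsto\top$, $G\rightarrow\top\mapsto\top$, $\top\rightarrow G\mapsto G$. A variable $x$ is positively (resp. negatively) weakly restricted in a quantifier-free formula $G$ if the formula obtained from $G$ by first replacing every atomic formula $A$ of $G$ with $x\in\mathrm{RV}(A)$ by $\bot$ and then applying the simplification transformations is $\top$ (resp. $\bot$). A semi-safe prenex sentence $Q_1x_1\cdots Q_nx_nM$ is safe if for every occurrence of every variable $x_i$: (a) if $Q_i=\forall$, the occurrence belongs to a positive subformula (of the sentence) in which $x_i$ is positively weakly restricted, or to a negative subformula in which $x_i$ is negatively weakly restricted; (b) if $Q_i=\exists$, the occurrence belongs to a negative subformula in which $x_i$ is positively weakly restricted, or to a positive subformula in which $x_i$ is negatively weakly restricted. *)

(* Defs.v *)
From Stdlib Require Import List Arith Bool.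
Import ListNotations.

(* Variables and object constants are indexed by nat; no function constants. *)
Inductive term : Type :=
  | Var (v : nat)
  | Const (c : nat).

Inductive formula : Type :=
  | FBot
  | FPred (p : nat) (args : list term)
  | FEq (t1 t2 : term)
  | FAnd (G H : formula)
  | FOr (G H : formula)
  | FImp (G H : formula)
  | FAll (x : nat) (G : formula)
  | FEx (x : nat) (G : formula).

Definition FTop : formula := FImp FBot FBot.
Definition FNeg (G : formula) : formula := FImp G FBot.

Definition is_bot (G : formula) : bool :=
  match G with FBot => true | _ => false end.
Definition is_top (G : formula) : bool :=
  match G with FImp FBot FBot => true | _ => false end.

Definition term_has_var (x : nat) (t : term) : bool :=
  match t with Var v => Nat.eqb v x | Const _ => false end.

Definition term_free_in (x : nat) (t : term) : bool := term_has_var x t.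

Fixpoint free_in (y : nat) (F : formula) : bool :=
  match F with
  | FBot => false
  | FPred _ l => existsb (term_free_in y) l
  | FEq t1 t2 => term_free_in y t1 || term_free_in y t2
  | FAnd G H | FOr G H | FImp G H => free_in y G || free_in y H
  | FAll x G | FEx x G => if Nat.eqb x y then false else free_in y G
  end.

Definition subst_term (x c : nat) (t : term) : term :=
  match t with
  | Var v => if Nat.eqb v x then Const c else Var v
  | Const d => Const d
  end.

Fixpoint subst (x c : nat) (F : formula) : formula :=
  match F with
  | FBot => FBot
  | FPred p l => FPred p (map (subst_term x c) l)
  | FEq t1 t2 => FEq (subst_term x c t1) (subst_term x c t2)
  | FAnd G H => FAnd (subst x c G) (subst x c H)
  | FOr G H => FOr (subst x c G) (subst x c H)
  | FImp G H => FImp (subst x c G) (subst x c H)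
  | FAll y G => if Nat.eqb y x then FAll y G else FAll y (subst x c G)
  | FEx y G => if Nat.eqb y x then FEx y G else FEx y (subst x c G)
  end.

Fixpoint is_qf (F : formula) : bool :=
  match F with
  | FBot | FPred _ _ | FEq _ _ => true
  | FAnd G H | FOr G H | FImp G H => is_qf G && is_qf H
  | FAll _ _ | FEx _ _ => false
  end.

Definition is_atom (F : formula) : bool :=
  match F with FPred _ _ | FEq _ _ => true | _ => false end.

Definition atom_terms (F : formula) : list term :=
  match F with
  | FPred _ l => l
  | FEq t1 t2 => [t1; t2]
  | _ => []
  end.

Inductive quant : Type := QAll | QEx.

Definition prenex (qs : list (quant * nat)) (M : formula) : formula :=
  fold_right (fun qx F => match fst qx with
                          | QAll => FAll (snd qx) F
                          | QEx => FEx (snd qx) F end) M qs.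

Definition is_prenex (F : formula) : Prop :=
  exists qs M, F = prenex qs M /\ is_qf M = true.

Definition is_sentence (F : formula) : Prop := forall y, free_in y F = false.

(* x in RV(G), for quantifier-free G *)
Fixpoint rv (x : nat) (G : formula) : bool :=
  match G with
  | FBot => false
  | FEq (Var _) (Var _) => false
  | FEq t1 t2 => term_has_var x t1 || term_has_var x t2
  | FPred _ l => existsb (term_has_var x) l
  | FAnd G H => rv x G || rv x H
  | FOr G H => rv x G && rv x H
  | FImp _ _ => false
  | FAll _ _ | FEx _ _ => false
  end.

(* Exhaustive application of the simplification transformations (bottom-up). *)
Fixpoint simp (G : formula) : formula :=
  match G with
  | FAnd G1 G2 =>
      let a := simp G1 in let b := simp G2 in
      if is_bot a || is_bot b then FBot
      else if is_top a then b
      else if is_top b then a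
      else FAnd a b
  | FOr G1 G2 =>
      let a := simp G1 in let b := simp G2 in
      if is_bot a then b
      else if is_bot b then a
      else if is_top a || is_top b then FTop
      else FOr a b
  | FImp G1 G2 =>
      let a := simp G1 in let b := simp G2 in
      if is_bot a then FTop
      else if is_top b then FTop
      else if is_top a then b
      else FImp a b
  | _ => G
  end.

Fixpoint kill (x : nat) (G : formula) : formula :=
  match G with
  | FPred _ _ | FEq _ _ => if rv x G then FBot else G
  | FAnd G1 G2 => FAnd (kill x G1) (kill x G2)
  | FOr G1 G2 => FOr (kill x G1) (kill x G2)
  | FImp G1 G2 => FImp (kill x G1) (kill x G2)
  | _ => G
  end.

Definition pos_wr (x : nat) (G : formula) : Prop := simp (kill x G) = FTop.
Definition neg_wr (x : nat) (G : formula) : Prop := simp (kill x G) = FBot.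

(* Positions in a quantifier-free formula: paths; false = left, true = right *)
Fixpoint sub (M : formula) (p : list bool) : option formula :=
  match p with
  | [] => Some M
  | b :: p' =>
      match M with
      | FAnd G H | FOr G H | FImp G H => sub (if b then H else G) p'
      | _ => None
      end
  end.

Fixpoint negc (M : formula) (p : list bool) : nat :=
  match p with
  | [] => 0
  | b :: p' =>
      match M with
      | FImp G H => if b then negc H p' else S (negc G p')
      | FAnd G H | FOr G H => negc (if b then H else G) p'
      | _ => 0
      end
  end.

Definition occurs_at (x : nat) (M : formula) (p : list bool) : Prop :=
  exists A, sub M p = Some A /\ is_atom A = true /\ In (Var x) (atom_terms A).

Definition semi_safe_body (qs : list (quant * nat)) (M : formula) : Prop :=
  forall x p, In x (map snd qs) -> occurs_at x M p -> negc M p = 0 ->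
    exists q r G H, p = q ++ r /\ sub M q = Some (FImp G H) /\ rv x G = true.

Definition safe_body (qs : list (quant * nat)) (M : formula) : Prop :=
  forall Q x, In (Q, x) qs -> forall p, occurs_at x M p ->
    exists q r G, p = q ++ r /\ sub M q = Some G /\
      match Q with
      | QAll => (Nat.even (negc M q) = true /\ pos_wr x G) \/
                (Nat.odd (negc M q) = true /\ neg_wr x G)
      | QEx => (Nat.odd (negc M q) = true /\ pos_wr x G) \/
               (Nat.even (negc M q) = true /\ neg_wr x G)
      end.

Definition semi_safe (F : formula) : Prop :=
  exists qs M, F = prenex qs M /\ is_qf M = true /\ NoDup (map snd qs) /\
    is_sentence F /\ semi_safe_body qs M.

Definition safe (F : formula) : Prop :=
  exists qs M, F = prenex qs M /\ is_qf M = true /\ NoDup (map snd qs) /\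
    is_sentence F /\ semi_safe_body qs M /\ safe_body qs M.

(* Main.v *)
Require Import Defs.
From Stdlib Require Import List Arith Bool.
Import ListNotations.

Lemma sub_subst x c p : forall M, sub (subst x c M) p = option_map (subst x c) (sub M p).
Proof.
  induction p as [|b p IH]; intros M;
  destruct M; simpl; try reflexivity;
  try (destruct b; apply IH);
  destruct (Nat.eqb x0 x); reflexivity.
Qed.

Lemma negc_subst x c p : forall M, negc (subst x c M) p = negc M p.
Proof.
  induction p as [|b p IH]; intros M;
  destruct M; simpl; try reflexivity;
  try (destruct b; rewrite ?IH; reflexivity);
  destruct (Nat.eqb x0 x); reflexivity.
Qed.

Lemma sub_qf p : forall M G, is_qf M = true -> sub M p = Some G -> is_qf G = true.
Proof.
  induction p as [|b p IH]; intros M G HM Hs.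
  - destruct M; simpl in Hs; congruence.
  - destruct M; try discriminate; simpl in HM; apply andb_prop in HM;
    destruct HM; destruct b; eauto.
Qed.

Lemma subst_term_var x c t y : subst_term x c t = Var y -> t = Var y /\ y <> x.
Proof.
  destruct t as [v|d]; simpl; [|discriminate].
  destruct (Nat.eqb v x) eqn:E; [discriminate|].
  intros H; inversion H; subst. split; [reflexivity|].
  intro; subst; rewrite Nat.eqb_refl in E; discriminate.
Qed.

Lemma occurs_subst x c y M p : occurs_at y (subst x c M) p -> occurs_at y M p /\ y <> x.
Proof.
  intros [A [HA [Hat Hin]]].
  rewrite sub_subst in HA. destruct (sub M p) as [B|] eqn:HB; [|discriminate].
  simpl in HA. inversion HA; subst A. clear HA.
  destruct B; simpl in Hat; try discriminate; try (destruct (Nat.eqb _ _); discriminate); simpl in Hin.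
  - apply in_map_iff in Hin. destruct Hin as [t [Ht Hin]].
    apply subst_term_var in Ht. destruct Ht; subst.
    split; [|assumption]. exists (FPred p0 args). auto.
  - destruct Hin as [Hin|[Hin|[]]]; apply subst_term_var in Hin;
    destruct Hin; subst; (split; [|assumption]); eexists; repeat split; eauto; simpl; auto.
Qed.

Lemma has_var_subst x c y t : y <> x -> term_has_var y t = true ->
  term_has_var y (subst_term x c t) = true.
Proof.
  intros Hne. destruct t as [v|d]; simpl; [|discriminate].
  intros H. apply Nat.eqb_eq in H; subst.
  destruct (Nat.eqb y x) eqn:E. apply Nat.eqb_eq in E; contradiction.
  simpl. apply Nat.eqb_refl.
Qed.

Lemma rv_subst x c y G : y <> x -> rv y G = true -> rv y (subst x c G) = true.
Proof.
  intros Hne. induction G; simpl; try discriminate.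
  - intros H. apply existsb_exists in H. destruct H as [t [Hin Ht]].
    apply existsb_exists. exists (subst_term x c t). split.
    apply in_map; auto. apply has_var_subst; auto.
  - intros H.
    assert (H' : term_has_var y t1 || term_has_var y t2 = true /\
                 ~ (exists a b, t1 = Var a /\ t2 = Var b)).
    { destruct t1, t2; simpl in H; try discriminate; split; auto;
      intros [a [b [E1 E2]]]; discriminate. }
    destruct H' as [H1 H2].
    assert (H3 : term_has_var y (subst_term x c t1) || term_has_var y (subst_term x c t2) = true).
    { apply orb_true_iff in H1; apply orb_true_iff; destruct H1;
      [left|right]; apply has_var_subst; auto. }
    destruct (subst_term x c t1) eqn:E1, (subst_term x c t2) eqn:E2; auto.
    exfalso; apply H2.
    destruct t1, t2; simpl in E1, E2; try (destruct (Nat.eqb v x)); try (destruct (Nat.eqb v0 x)); try discriminate; eauto.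
  - intros H; apply orb_true_iff in H; apply orb_true_iff; destruct H; auto.
  - intros H; apply andb_true_iff in H; apply andb_true_iff; destruct H; auto.
Qed.

Definition Ref (a a' : formula) : Prop := (a = FTop -> a' = FTop) /\ (a = FBot -> a' = FBot).

Lemma is_bot_t f : is_bot f = true -> f = FBot.
Proof. destruct f; simpl; congruence. Qed.
Lemma is_bot_f f : is_bot f = false -> f <> FBot.
Proof. destruct f; simpl; congruence. Qed.
Lemma is_top_t f : is_top f = true -> f = FTop.
Proof. intro H; destruct f; simpl in H; try discriminate; destruct f1; try discriminate; destruct f2; try discriminate; reflexivity. Qed.
Lemma is_top_f f : is_top f = false -> f <> FTop.
Proof. intros H E; subst; discriminate. Qed.

Lemma tri f : (f = FBot) \/ (f = FTop) \/
  (f <> FBot /\ f <> FTop /\ is_bot f = false /\ is_top f = false).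
Proof.
  destruct (is_bot f) eqn:E1. left; apply is_bot_t; auto.
  destruct (is_top f) eqn:E2. right; left; apply is_top_t; auto.
  right; right. split; [apply is_bot_f|split; [apply is_top_f|]]; auto.
Qed.

Ltac cls f := let H1 := fresh in let H2 := fresh in let H3 := fresh in let H4 := fresh in
  destruct (tri f) as [->|[->|[H1 [H2 [H3 H4]]]]]; [ | | try rewrite H3; try rewrite H4].

Ltac finish :=
  unfold Ref, FTop in *; simpl; split; intros;
  try match goal with H : _ = _ |- _ => discriminate H end;
  firstorder (try congruence).

Definition sAnd a b :=
      if is_bot a || is_bot b then FBot
      else if is_top a then b
      else if is_top b then a
      else FAnd a b.
Definition sOr a b :=
      if is_bot a then b
      else if is_bot b then a
      else if is_top a || is_top b then FTop
      else FOr a b.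
Definition sImp a b :=
      if is_bot a then FTop
      else if is_top b then FTop
      else if is_top a then b
      else FImp a b.

Lemma ref_and a b a' b' : Ref a a' -> Ref b b' -> Ref (sAnd a b) (sAnd a' b').
Proof. intros; unfold sAnd; cls a; cls b; cls a'; cls b'; finish. Qed.
Lemma ref_or a b a' b' : Ref a a' -> Ref b b' -> Ref (sOr a b) (sOr a' b').
Proof. intros; unfold sOr; cls a; cls b; cls a'; cls b'; finish. Qed.
Lemma ref_imp a b a' b' : Ref a a' -> Ref b b' -> Ref (sImp a b) (sImp a' b').
Proof. intros; unfold sImp; cls a; cls b; cls a'; cls b'; finish. Qed.

Lemma kill_atom y A : is_atom A = true -> kill y A = if rv y A then FBot else A.
Proof. destruct A; simpl; try discriminate; reflexivity. Qed.

Lemma is_atom_subst x c A : is_atom A = true -> is_atom (subst x c A) = true.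
Proof. destruct A; simpl; try discriminate; reflexivity. Qed.

Lemma simp_atom A : is_atom A = true -> simp A = A.
Proof. destruct A; simpl; try discriminate; reflexivity. Qed.

Lemma ref_atom x c y A : y <> x -> is_atom A = true ->
  Ref (simp (kill y A)) (simp (kill y (subst x c A))).
Proof.
  intros Hne HA. rewrite (kill_atom y A HA), (kill_atom y _ (is_atom_subst x c A HA)).
  destruct (rv y A) eqn:E.
  - rewrite (rv_subst x c y _ Hne E). split; auto.
  - rewrite (simp_atom A HA). split; intro; subst; discriminate.
Qed.

Lemma ref_kill x c y G : y <> x -> is_qf G = true ->
  Ref (simp (kill y G)) (simp (kill y (subst x c G))).
Proof.
  intros Hne; induction G; intros Hq; try discriminate.
  - split; auto.
  - apply ref_atom; auto.
  - apply ref_atom; auto.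
  - simpl in Hq; apply andb_prop in Hq; destruct Hq.
    change (Ref (sAnd (simp (kill y G1)) (simp (kill y G2))) (sAnd (simp (kill y (subst x c G1))) (simp (kill y (subst x c G2))))).
    apply ref_and; auto.
  - simpl in Hq; apply andb_prop in Hq; destruct Hq.
    change (Ref (sOr (simp (kill y G1)) (simp (kill y G2))) (sOr (simp (kill y (subst x c G1))) (simp (kill y (subst x c G2))))).
    apply ref_or; auto.
  - simpl in Hq; apply andb_prop in Hq; destruct Hq.
    change (Ref (sImp (simp (kill y G1)) (simp (kill y G2))) (sImp (simp (kill y (subst x c G1))) (simp (kill y (subst x c G2))))).
    apply ref_imp; auto.
Qed.

Lemma prenex_subst x c qs M : ~ In x (map snd qs) ->
  subst x c (prenex qs M) = prenex qs (subst x c M).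
Proof.
  induction qs as [|[[|] z] qs IH]; intros Hn; simpl in *; auto;
  (destruct (Nat.eqb z x) eqn:E; [apply Nat.eqb_eq in E; subst; tauto|]);
  rewrite IH; auto.
Qed.

Lemma qf_subst x c M : is_qf M = true -> is_qf (subst x c M) = true.
Proof.
  induction M; simpl; intros H; auto; try discriminate;
  apply andb_prop in H; destruct H; rewrite IHM1, IHM2; auto.
Qed.

Lemma term_free_subst x c y t : term_free_in y (subst_term x c t) = true ->
  term_free_in y t = true /\ y <> x.
Proof.
  destruct t as [v|d]; simpl; [|discriminate].
  destruct (Nat.eqb v x) eqn:E; simpl; [discriminate|].
  intros H; apply Nat.eqb_eq in H; subst. split; [simpl; apply Nat.eqb_refl|].
  intro; subst; rewrite Nat.eqb_refl in E; discriminate.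
Qed.

Lemma free_subst x c y F : free_in y (subst x c F) = true -> free_in y F = true /\ y <> x.
Proof.
  induction F; simpl; intros H; try discriminate.
  - apply existsb_exists in H; destruct H as [t [Hin Ht]].
    apply in_map_iff in Hin; destruct Hin as [u [<- Hu]].
    apply term_free_subst in Ht; destruct Ht. split; auto.
    apply existsb_exists; eauto.
  - apply orb_true_iff in H; destruct H as [H|H]; apply term_free_subst in H;
    destruct H; split; auto; apply orb_true_iff; auto.
  - apply orb_true_iff in H; destruct H as [H|H]; [apply IHF1 in H|apply IHF2 in H];
    destruct H; split; auto; apply orb_true_iff; auto.
  - apply orb_true_iff in H; destruct H as [H|H]; [apply IHF1 in H|apply IHF2 in H];
    destruct H; split; auto; apply orb_true_iff; auto.
  - apply orb_true_iff in H; destruct H as [H|H]; [apply IHF1 in H|apply IHF2 in H];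
    destruct H; split; auto; apply orb_true_iff; auto.
  - destruct (Nat.eqb x0 x) eqn:E; simpl in H.
    + apply Nat.eqb_eq in E; subst.
      destruct (Nat.eqb x y) eqn:E2; [discriminate|]. split; auto.
      intro; subst; rewrite Nat.eqb_refl in E2; discriminate.
    + destruct (Nat.eqb x0 y); [discriminate|]. apply IHF; auto.
  - destruct (Nat.eqb x0 x) eqn:E; simpl in H.
    + apply Nat.eqb_eq in E; subst.
      destruct (Nat.eqb x y) eqn:E2; [discriminate|]. split; auto.
      intro; subst; rewrite Nat.eqb_refl in E2; discriminate.
    + destruct (Nat.eqb x0 y); [discriminate|]. apply IHF; auto.
Qed.

Lemma sent_helper x F : is_sentence (FAll x F) \/ is_sentence (FEx x F) ->
  forall y, y <> x -> free_in y F = false.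
Proof.
  intros Hs y Hy. destruct Hs as [Hs|Hs]; specialize (Hs y); simpl in Hs;
  destruct (Nat.eqb x y) eqn:E; try (apply Nat.eqb_eq in E; congruence); auto.
Qed.

Lemma extract F x : safe (FAll x F) \/ safe (FEx x F) ->
  exists Q qs M, F = prenex qs M /\ is_qf M = true /\ NoDup (x :: map snd qs) /\
    (forall y, y <> x -> free_in y F = false) /\
    semi_safe_body ((Q, x) :: qs) M /\ safe_body ((Q, x) :: qs) M.
Proof.
  intros [[qs0 [M [Heq [Hq [Hnd [Hs [Hss Hsb]]]]]]]|[qs0 [M [Heq [Hq [Hnd [Hs [Hss Hsb]]]]]]]].
  - destruct qs0 as [|[[|] z] qs]; simpl in Heq;
    [subst M; discriminate| |discriminate].
    injection Heq; intros; subst.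
    exists QAll, qs, M; repeat split; auto.
    apply sent_helper; auto.
  - destruct qs0 as [|[[|] z] qs]; simpl in Heq;
    [subst M; discriminate|discriminate|].
    injection Heq; intros; subst.
    exists QEx, qs, M; repeat split; auto.
    apply sent_helper; auto.
Qed.

Theorem lemma5 (F : formula) (x : nat) :
  is_prenex F ->
  (forall y, free_in y F = true -> y = x) ->
  (safe (FAll x F) \/ safe (FEx x F)) ->
  forall c : nat, safe (subst x c F).
Proof.
  intros _ _ H c.
  destruct (extract F x H) as [Q0 [qs [M [-> [Hq [Hnd [Hfree [Hss Hsb]]]]]]]].
  apply NoDup_cons_iff in Hnd; destruct Hnd as [Hnin Hnd].
  exists qs, (subst x c M).
  rewrite (prenex_subst x c qs M Hnin).
  split; [reflexivity|]. split; [apply qf_subst; auto|]. split; [auto|].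
  split; [|split].
  - intro y. rewrite <- (prenex_subst x c qs M Hnin).
    destruct (free_in y (subst x c (prenex qs M))) eqn:E; auto.
    apply free_subst in E; destruct E as [E1 E2]. rewrite (Hfree y E2) in E1; discriminate.
  - intros y p Hin Hocc Hneg.
    apply occurs_subst in Hocc; destruct Hocc as [Hocc Hne].
    rewrite negc_subst in Hneg.
    destruct (Hss y p (or_intror Hin) Hocc Hneg) as [q [r [G [K [Hp [Hsub Hrv]]]]]].
    exists q, r, (subst x c G), (subst x c K). rewrite sub_subst, Hsub.
    split; auto. split; auto. apply rv_subst; auto.
  - intros Q y Hin p Hocc.
    apply occurs_subst in Hocc; destruct Hocc as [Hocc Hne].
    destruct (Hsb Q y (or_intror Hin) p Hocc) as [q [r [G [Hp [Hsub HQ]]]]].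
    exists q, r, (subst x c G). rewrite sub_subst, Hsub, negc_subst.
    split; auto. split; auto.
    assert (Hqf : is_qf G = true) by (apply (sub_qf q M G); auto).
    destruct (ref_kill x c y G Hne Hqf) as [RT RB].
    unfold pos_wr, neg_wr in *.
    destruct Q; destruct HQ as [[? ?]|[? ?]]; [left|right|left|right]; split; auto.
Qed.
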